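(* For $\gamma>0$ let $\Theta^*$ be a random variable on $\mathbb S^1=\mathbb R/2\pi\mathbb Z$ with density $u^*$, where $u^*(\theta)=\frac1Z\Big(\frac{(e^{-2\pi\alpha}-1)e^{\alpha(\theta+2\sin\theta)}}{\int_0^{2\pi}e^{-\alpha(r+2\sin r)}dr}\int_0^\theta e^{-\alpha(r+2\sin r)}dr+e^{\alpha(\theta+2\sin\theta)}\Big)$, $\alpha=2/\gamma$, $Z$ a normalizer. Then for any constants $c>0$ and $\epsilon>0$ there exists $\gamma_0>0$ such that $\mathbb P[|\Theta^*-2\pi/3|>c]<\epsilon$ for all $0<\gamma<\gamma_0$ (distance measured on the circle).
   Context: $u^*$ is the invariant density of $d\theta=I_2(1+2\cos\theta)dt+\sqrt{\gamma I_2}dB_t$ on the circle (for any fixed $I_2>0$). *)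

(* Defs.v *)
From Stdlib Require Import Reals.
From Coquelicot Require Import Coquelicot.
Open Scope R_scope.

Definition alpha (gamma : R) : R := 2 / gamma.

Definition w_minus (gamma r : R) : R := exp (- alpha gamma * (r + 2 * sin r)).
Definition w_plus (gamma t : R) : R := exp (alpha gamma * (t + 2 * sin t)).

Definition u_unnorm (gamma theta : R) : R :=
  (exp (- 2 * PI * alpha gamma) - 1) * w_plus gamma theta
    / RInt (w_minus gamma) 0 (2 * PI)
    * RInt (w_minus gamma) 0 theta
  + w_plus gamma theta.

Definition Zc (gamma : R) : R := RInt (u_unnorm gamma) 0 (2 * PI).

(* The invariant density u^* on the fundamental domain [0, 2 pi). *)
Definition u_star (gamma theta : R) : R := u_unnorm gamma theta / Zc gamma.

Definition circ_dist (x y : R) : R := Rmin (Rabs (x - y)) (2 * PI - Rabs (x - y)).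

Definition prob_far (gamma c : R) : R :=
  RInt (fun theta => if Rlt_dec c (circ_dist theta (2 * PI / 3))
                     then u_star gamma theta else 0) 0 (2 * PI).

(* Main.v *)
Require Import Defs.
From Stdlib Require Import Reals Lra.
From Coquelicot Require Import Coquelicot.
Open Scope R_scope.

Definition V (x : R) : R := x + 2 * sin x.

Lemma PI_gt3 : 3 < PI.
Proof. generalize PI2_3_2; lra. Qed.

Lemma exp_le_mono x y : x <= y -> exp x <= exp y.
Proof. intros [H|H]; [left; apply exp_increasing; auto| subst; lra]. Qed.

Lemma V_deriv x : derivable_pt_lim V x (1 + 2 * cos x).
Proof.
  apply is_derive_Reals. unfold V. auto_derive; auto. ring.
Qed.

Lemma V_mvt x y : x < y -> exists z, V y - V x = (1 + 2 * cos z) * (y - x) /\ x < z < y.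
Proof.
  intros H. apply (MVT_cor2 V (fun z => 1 + 2 * cos z)); auto.
  intros; apply V_deriv.
Qed.

Lemma V_lip x y : Rabs (V x - V y) <= 3 * Rabs (x - y).
Proof.
  destruct (Rtotal_order x y) as [H|[H|H]].
  - destruct (V_mvt x y H) as [z [Hz _]].
    generalize (COS_bound z); intros.
    rewrite (Rabs_left (x - y)) by lra.
    unfold Rabs; destruct Rcase_abs; nra.
  - subst. replace (V y - V y) with 0 by ring. rewrite Rabs_R0. 
    generalize (Rabs_pos (y - y)); lra.
  - destruct (V_mvt y x H) as [z [Hz _]].
    generalize (COS_bound z); intros.
    rewrite (Rabs_right (x - y)) by lra.
    unfold Rabs; destruct Rcase_abs; nra.
Qed.

Lemma cos_2PI3 : cos (2 * PI / 3) = - (1/2).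
Proof.
  replace (2 * PI / 3) with (PI - PI / 3) by field.
  rewrite Rtrigo_facts.cos_pi_minus, cos_PI3. lra.
Qed.

Lemma cos_4PI3 : cos (4 * PI / 3) = - (1/2).
Proof.
  replace (4 * PI / 3) with (PI + PI / 3) by field.
  rewrite Rtrigo_facts.cos_pi_plus, cos_PI3. lra.
Qed.

Lemma cos_r1 t : 0 <= t < 2 * PI / 3 -> - (1/2) < cos t.
Proof.
  intros H. rewrite <- cos_2PI3. generalize PI_gt3; intro.
  apply cos_decreasing_1; lra.
Qed.

Lemma cos_r2 t : 2 * PI / 3 < t < 4 * PI / 3 -> cos t < - (1/2).
Proof.
  intros H. generalize PI_gt3; intro.
  destruct (Rle_dec t PI).
  - rewrite <- cos_2PI3. apply cos_decreasing_1; lra.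
  - rewrite <- cos_4PI3. apply cos_increasing_1; lra.
Qed.

Lemma cos_r3 t : 4 * PI / 3 < t <= 2 * PI -> - (1/2) < cos t.
Proof.
  intros H. generalize PI_gt3; intro.
  rewrite <- cos_4PI3. apply cos_increasing_1; lra.
Qed.

Lemma V_inc1 x y : 0 <= x -> x < y -> y <= 2 * PI / 3 -> V x < V y.
Proof.
  intros. destruct (V_mvt x y) as [z [Hz Hz2]]; auto.
  assert (- (1/2) < cos z) by (apply cos_r1; lra). nra.
Qed.

Lemma V_dec2 x y : 2 * PI / 3 <= x -> x < y -> y <= 4 * PI / 3 -> V y < V x.
Proof.
  intros. destruct (V_mvt x y) as [z [Hz Hz2]]; auto.
  assert (cos z < - (1/2)) by (apply cos_r2; lra). nra.
Qed.

Lemma V_inc3 x y : 4 * PI / 3 <= x -> x <= y -> y <= 2 * PI -> V x <= V y.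
Proof.
  intros H1 [H2|H2] H3; [|subst; lra].
  destruct (V_mvt x y) as [z [Hz Hz2]]; auto.
  assert (- (1/2) < cos z) by (apply cos_r3; lra). nra.
Qed.

Lemma V_ge0 x : 0 <= x <= 2 * PI -> 0 <= V x.
Proof.
  intros H. unfold V. generalize PI_gt3; intro.
  destruct (Rle_dec x PI).
  - generalize (sin_ge_0 x); intros; lra.
  - generalize (SIN_bound x); intros; lra.
Qed.

Lemma V_le2PI x : 0 <= x <= 2 * PI -> V x <= 2 * PI.
Proof.
  intros H. unfold V. generalize PI_gt3; intro.
  destruct (Rle_dec x PI).
  - generalize (SIN_bound x); intros; lra.
  - generalize (sin_le_0 x); intros; lra.
Qed.
Lemma V_inc1' x y : 0 <= x -> x <= y -> y <= 2 * PI / 3 -> V x <= V y.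
Proof. intros H1 [H|H] H3; [left; apply V_inc1; auto | subst; lra]. Qed.
Lemma V_dec2' x y : 2 * PI / 3 <= x -> x <= y -> y <= 4 * PI / 3 -> V y <= V x.
Proof. intros H1 [H|H] H3; [left; apply V_dec2; auto | subst; lra]. Qed.

Lemma V_ge_min r : 2 * PI / 3 <= r <= 2 * PI -> V (4 * PI / 3) <= V r.
Proof.
  intros H. destruct (Rle_dec r (4 * PI / 3)).
  - apply V_dec2'; lra.
  - apply V_inc3; lra.
Qed.

Definition kap (c' : R) := Rmin (V (2 * PI / 3) - V (2 * PI / 3 - c')) (V (2 * PI / 3) - V (2 * PI / 3 + c')).
Definition Dlt := V (2 * PI / 3) - V (4 * PI / 3).

Lemma kap_pos c' : 0 < c' <= PI / 3 -> 0 < kap c'.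
Proof.
  intros H. generalize PI_gt3; intro. unfold kap. apply Rmin_glb_lt.
  - generalize (V_inc1 (2 * PI / 3 - c') (2 * PI / 3)); intros; lra.
  - generalize (V_dec2 (2 * PI / 3) (2 * PI / 3 + c')); intros; lra.
Qed.

Lemma kap_le c' : 0 < c' <= PI / 3 -> kap c' <= Dlt.
Proof.
  intros H. generalize PI_gt3; intro. unfold kap, Dlt.
  generalize (Rmin_r (V (2 * PI / 3) - V (2 * PI / 3 - c')) (V (2 * PI / 3) - V (2 * PI / 3 + c'))).
  generalize (V_dec2' (2 * PI / 3 + c') (4 * PI / 3)). intros; lra.
Qed.

Lemma F3 c' t r : 0 < c' <= PI / 3 -> 0 <= t <= 2 * PI -> c' <= Rabs (t - 2 * PI / 3) ->
  t <= r <= 2 * PI -> V t - V r <= Dlt - kap c'.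
Proof.
  intros Hc Ht Ha Hr. generalize PI_gt3; intro.
  assert (K1 : kap c' <= V (2 * PI / 3) - V (2 * PI / 3 - c')) by apply Rmin_l.
  assert (K2 : kap c' <= V (2 * PI / 3) - V (2 * PI / 3 + c')) by apply Rmin_r.
  assert (D0 : V (4 * PI / 3) <= V (2 * PI / 3 + c')) by (apply V_dec2'; lra).
  unfold Dlt.
  destruct (Rle_dec t (2 * PI / 3)).
  - rewrite Rabs_left1 in Ha by lra.
    assert (V t <= V (2 * PI / 3 - c')) by (apply V_inc1'; lra).
    destruct (Rle_dec r (2 * PI / 3)).
    + assert (V t <= V r) by (apply V_inc1'; lra). lra.
    + assert (V (4 * PI / 3) <= V r) by (apply V_ge_min; lra). lra.
  - rewrite Rabs_right in Ha by lra.
    destruct (Rle_dec t (4 * PI / 3)).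
    + assert (V t <= V (2 * PI / 3 + c')) by (apply V_dec2'; lra).
      assert (V (4 * PI / 3) <= V r) by (apply V_ge_min; lra). lra.
    + assert (V t <= V r) by (apply V_inc3; lra). lra.
Qed.
Lemma wm_eq g r : w_minus g r = exp (- alpha g * V r).
Proof. reflexivity. Qed.
Lemma wp_eq g r : w_plus g r = exp (alpha g * V r).
Proof. reflexivity. Qed.

Lemma wm_cont g x : continuous (w_minus g) x.
Proof. apply (ex_derive_continuous (K:=R_AbsRing) (V:=R_NormedModule)). unfold w_minus. auto_derive. auto. Qed.
Lemma wp_cont g x : continuous (w_plus g) x.
Proof. apply (ex_derive_continuous (K:=R_AbsRing) (V:=R_NormedModule)). unfold w_plus. auto_derive. auto. Qed.

Lemma wm_ex g a b : ex_RInt (w_minus g) a b.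
Proof. apply (ex_RInt_continuous (V:=R_CompleteNormedModule)). intros; apply wm_cont. Qed.

Lemma P_cont g x : continuous (fun t => RInt (w_minus g) 0 t) x.
Proof.
  apply (ex_derive_continuous (K:=R_AbsRing) (V:=R_NormedModule)).
  exists (w_minus g x).
  apply (is_derive_RInt (V:=R_NormedModule) _ _ 0).
  - apply filter_forall. intros; apply (RInt_correct (V:=R_CompleteNormedModule)), wm_ex.
  - apply wm_cont.
Qed.

Lemma u_cont g x : continuous (u_unnorm g) x.
Proof.
  unfold u_unnorm.
  apply (continuous_plus (fun t => (exp (- 2 * PI * alpha g) - 1) * w_plus g t
      / RInt (w_minus g) 0 (2 * PI) * RInt (w_minus g) 0 t) (w_plus g)).
  - apply (continuous_mult (fun t => (exp (- 2 * PI * alpha g) - 1) * w_plus g t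
      / RInt (w_minus g) 0 (2 * PI)) (fun t => RInt (w_minus g) 0 t)).
    + apply (continuous_mult (fun t => (exp (- 2 * PI * alpha g) - 1) * w_plus g t)
         (fun _ => / RInt (w_minus g) 0 (2 * PI))).
      * apply (continuous_mult (fun _ => (exp (- 2 * PI * alpha g) - 1)) (w_plus g)).
        apply continuous_const. apply wp_cont.
      * apply continuous_const.
    + apply P_cont.
  - apply wp_cont.
Qed.

Lemma us_cont g x : continuous (u_star g) x.
Proof.
  unfold u_star.
  apply (continuous_mult (u_unnorm g) (fun _ => / Zc g)).
  apply u_cont. apply continuous_const.
Qed.

Lemma us_ex g a b : ex_RInt (u_star g) a b.
Proof. apply (ex_RInt_continuous (V:=R_CompleteNormedModule)). intros; apply us_cont. Qed.
Lemma u_ex g a b : ex_RInt (u_unnorm g) a b.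
Proof. apply (ex_RInt_continuous (V:=R_CompleteNormedModule)). intros; apply u_cont. Qed.
Notation M g := (RInt (w_minus g) 0 (2 * PI)).

Lemma alpha_pos g : 0 < g -> 0 < alpha g.
Proof. intros; unfold alpha; apply Rdiv_lt_0_compat; lra. Qed.

Lemma chas g x y z : RInt (w_minus g) x y + RInt (w_minus g) y z = RInt (w_minus g) x z.
Proof. apply (RInt_Chasles (V:=R_CompleteNormedModule)); apply wm_ex. Qed.

Lemma wm_int_ge0 g x y : x <= y -> 0 <= RInt (w_minus g) x y.
Proof.
  intros. apply RInt_ge_0; auto. apply wm_ex. intros; unfold w_minus; left; apply exp_pos.
Qed.

Lemma M_pos g : 0 < M g.
Proof.
  apply RInt_gt_0. generalize PI_gt3; lra.
  intros; unfold w_minus; apply exp_pos. intros; apply wm_cont.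
Qed.

Lemma RInt_const_R (a b E : R) : RInt (fun _ => E) a b = (b - a) * E.
Proof. rewrite (RInt_const (V:=R_CompleteNormedModule)). reflexivity. Qed.

Lemma M_le g : 0 < g -> M g <= 2 * PI.
Proof.
  intros Hg. generalize PI_gt3; intro.
  assert (HH : RInt (w_minus g) 0 (2 * PI) <= RInt (fun _ => 1) 0 (2 * PI)).
  { apply RInt_le. lra. apply wm_ex.
    apply (ex_RInt_const (V:=R_CompleteNormedModule)).
    intros x Hx. rewrite wm_eq. rewrite <- exp_0. apply exp_le_mono.
    generalize (V_ge0 x) (alpha_pos g Hg); intros. 
    assert (0 <= V x) by (apply V_ge0; lra). nra. }
  rewrite RInt_const_R in HH. lra.
Qed.

Lemma decomp g t : u_unnorm g t =
  w_plus g t * (exp (- 2 * PI * alpha g) * RInt (w_minus g) 0 t + RInt (w_minus g) t (2 * PI)) / M g.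
Proof.
  generalize (M_pos g) (chas g 0 t (2 * PI)); intros HM HC.
  unfold u_unnorm. rewrite <- HC. field. lra.
Qed.

Lemma u_ge0 g t : 0 <= t <= 2 * PI -> 0 <= u_unnorm g t.
Proof.
  intros Ht. rewrite decomp. generalize (M_pos g); intro.
  apply Rmult_le_pos; [|left; apply Rinv_0_lt_compat; auto].
  apply Rmult_le_pos. unfold w_plus; left; apply exp_pos.
  apply Rplus_le_le_0_compat. apply Rmult_le_pos. left; apply exp_pos.
  apply wm_int_ge0; lra. apply wm_int_ge0; lra.
Qed.
Lemma RInt_scal_R f a b k : ex_RInt f a b -> RInt (fun x => k * f x) a b = k * RInt f a b.
Proof. intros H. apply (RInt_scal (V:=R_CompleteNormedModule) f a b k H). Qed.

Lemma upper_B g c' t : 0 < g -> 0 < c' <= PI / 3 -> 0 <= t <= 2 * PI -> c' <= Rabs (t - 2 * PI / 3) ->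
  w_plus g t * RInt (w_minus g) t (2 * PI) <= 2 * PI * exp (alpha g * (Dlt - kap c')).
Proof.
  intros Hg Hc Ht Ha. generalize (alpha_pos g Hg) PI_gt3; intros Hal HPI.
  rewrite <- RInt_scal_R by apply wm_ex.
  assert (HH : RInt (fun x => w_plus g t * w_minus g x) t (2 * PI) <=
               RInt (fun _ => exp (alpha g * (Dlt - kap c'))) t (2 * PI)).
  { apply RInt_le. lra.
    apply (ex_RInt_scal (V:=R_CompleteNormedModule) (w_minus g) t (2*PI) (w_plus g t)), wm_ex.
    apply (ex_RInt_const (V:=R_CompleteNormedModule)).
    intros x Hx. rewrite wp_eq, wm_eq, <- exp_plus. apply exp_le_mono.
    assert (V t - V x <= Dlt - kap c') by (apply F3; lra). nra. }
  rewrite RInt_const_R in HH. generalize (exp_pos (alpha g * (Dlt - kap c'))); intro. nra.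
Qed.

Lemma upper_u g c' t : 0 < g -> 0 < c' <= PI / 3 -> 0 <= t <= 2 * PI -> c' <= Rabs (t - 2 * PI / 3) ->
  u_unnorm g t <= 2 * PI * exp (alpha g * (Dlt - kap c')) / M g + 1.
Proof.
  intros Hg Hc Ht Ha. generalize (alpha_pos g Hg) PI_gt3 (M_pos g); intros Hal HPI HM.
  rewrite decomp.
  assert (E1 : w_plus g t * exp (- 2 * PI * alpha g) <= 1).
  { rewrite wp_eq, <- exp_plus, <- exp_0. apply exp_le_mono.
    assert (V t <= 2 * PI) by (apply V_le2PI; lra). nra. }
  assert (A1 : RInt (w_minus g) 0 t <= M g).
  { rewrite <- (chas g 0 t (2 * PI)). generalize (wm_int_ge0 g t (2 * PI)); intros; lra. }
  assert (A0 : 0 <= RInt (w_minus g) 0 t) by (apply wm_int_ge0; lra).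
  generalize (upper_B g c' t Hg Hc Ht Ha); intro UB.
  assert (Hw : 0 < w_plus g t) by (apply exp_pos).
  assert (Hex : 0 < exp (- 2 * PI * alpha g)) by (apply exp_pos).
  replace (w_plus g t * (exp (- 2 * PI * alpha g) * RInt (w_minus g) 0 t + RInt (w_minus g) t (2 * PI)) / M g)
    with ((w_plus g t * exp (- 2 * PI * alpha g)) * (RInt (w_minus g) 0 t / M g)
          + w_plus g t * RInt (w_minus g) t (2 * PI) / M g) by (field; lra).
  assert (R1 : RInt (w_minus g) 0 t / M g <= 1).
  { apply (Rmult_le_reg_r (M g)); [lra|]. unfold Rdiv. rewrite Rmult_assoc, Rinv_l, Rmult_1_l, Rmult_1_r; lra. }
  assert (R0 : 0 <= RInt (w_minus g) 0 t / M g).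
  { unfold Rdiv; apply Rmult_le_pos; [lra| left; apply Rinv_0_lt_compat; lra]. }
  assert (P0 : 0 <= w_plus g t * exp (- 2 * PI * alpha g)) by nra.
  assert (S1 : w_plus g t * RInt (w_minus g) t (2 * PI) / M g <= 2 * PI * exp (alpha g * (Dlt - kap c')) / M g).
  { unfold Rdiv. apply Rmult_le_compat_r. left; apply Rinv_0_lt_compat; auto. auto. }
  nra.
Qed.
Lemma lower_B g d t : 0 < g -> 0 < d <= PI / 3 -> Rabs (t - 2 * PI / 3) <= d ->
  2 * d * exp (- alpha g * (V (4 * PI / 3) + 3 * d)) <= RInt (w_minus g) t (2 * PI).
Proof.
  intros Hg Hd Ht. generalize (alpha_pos g Hg) PI_gt3; intros Hal HPI.
  assert (T : 2 * PI / 3 - d <= t <= 2 * PI / 3 + d).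
  { unfold Rabs in Ht; destruct Rcase_abs in Ht; lra. }
  rewrite <- (chas g t (4 * PI / 3 - d) (2 * PI)).
  rewrite <- (chas g (4 * PI / 3 - d) (4 * PI / 3 + d) (2 * PI)).
  generalize (wm_int_ge0 g t (4 * PI / 3 - d)) (wm_int_ge0 g (4 * PI / 3 + d) (2 * PI)); intros I1 I2.
  assert (HH : RInt (fun _ => exp (- alpha g * (V (4 * PI / 3) + 3 * d))) (4 * PI / 3 - d) (4 * PI / 3 + d)
     <= RInt (w_minus g) (4 * PI / 3 - d) (4 * PI / 3 + d)).
  { apply RInt_le. lra. apply (ex_RInt_const (V:=R_CompleteNormedModule)). apply wm_ex.
    intros x Hx. rewrite wm_eq. apply exp_le_mono.
    generalize (V_lip x (4 * PI / 3)); intro L.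
    assert (Rabs (x - 4 * PI / 3) <= d) by (unfold Rabs; destruct Rcase_abs; lra).
    generalize (Rle_abs (V x - V (4 * PI / 3))); intro L2.
    assert (V x <= V (4 * PI / 3) + 3 * d) by lra.
    nra. }
  rewrite RInt_const_R in HH. 
  assert (I3 : 0 <= RInt (w_minus g) t (4 * PI / 3 - d)) by (apply I1; lra).
  assert (I4 : 0 <= RInt (w_minus g) (4 * PI / 3 + d) (2 * PI)) by (apply I2; lra).
  lra.
Qed.

Lemma lower_u g d t : 0 < g -> 0 < d <= PI / 3 -> Rabs (t - 2 * PI / 3) <= d ->
  2 * d * exp (alpha g * (Dlt - 6 * d)) / M g <= u_unnorm g t.
Proof.
  intros Hg Hd Ht. generalize (alpha_pos g Hg) PI_gt3 (M_pos g); intros Hal HPI HM.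
  assert (T : 2 * PI / 3 - d <= t <= 2 * PI / 3 + d).
  { unfold Rabs in Ht; destruct Rcase_abs in Ht; lra. }
  rewrite decomp.
  assert (W : exp (alpha g * (V (2 * PI / 3) - 3 * d)) <= w_plus g t).
  { rewrite wp_eq. apply exp_le_mono.
    generalize (V_lip t (2 * PI / 3)); intro L.
    generalize (Rle_abs (- (V t - V (2 * PI / 3)))); rewrite Rabs_Ropp; intro L2.
    assert (Rabs (t - 2 * PI / 3) <= d) by auto.
    assert (V (2 * PI / 3) - 3 * d <= V t) by lra.
    nra. }
  generalize (lower_B g d t Hg Hd Ht); intro B.
  assert (A0 : 0 <= exp (- 2 * PI * alpha g) * RInt (w_minus g) 0 t).
  { apply Rmult_le_pos. left; apply exp_pos. apply wm_int_ge0; lra. }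
  assert (E : exp (alpha g * (Dlt - 6 * d)) =
     exp (alpha g * (V (2 * PI / 3) - 3 * d)) * exp (- alpha g * (V (4 * PI / 3) + 3 * d))).
  { rewrite <- exp_plus. f_equal. unfold Dlt. ring. }
  rewrite E. unfold Rdiv. apply Rmult_le_compat_r. left; apply Rinv_0_lt_compat; auto.
  generalize (exp_pos (alpha g * (V (2 * PI / 3) - 3 * d)))
     (exp_pos (- alpha g * (V (4 * PI / 3) + 3 * d))); intros P1 P2.
  assert (0 <= RInt (w_minus g) t (2 * PI)) by (apply wm_int_ge0; lra).
  nra.
Qed.

Lemma lower_Z g d : 0 < g -> 0 < d <= PI / 3 ->
  4 * d * d * exp (alpha g * (Dlt - 6 * d)) / M g <= Zc g.
Proof.
  intros Hg Hd. generalize PI_gt3; intro HPI.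
  unfold Zc.
  assert (C1 : RInt (u_unnorm g) 0 (2 * PI / 3 - d) + RInt (u_unnorm g) (2 * PI / 3 - d) (2 * PI)
     = RInt (u_unnorm g) 0 (2 * PI)) by (apply (RInt_Chasles (V:=R_CompleteNormedModule)); apply u_ex).
  assert (C2 : RInt (u_unnorm g) (2 * PI / 3 - d) (2 * PI / 3 + d) + RInt (u_unnorm g) (2 * PI / 3 + d) (2 * PI)
     = RInt (u_unnorm g) (2 * PI / 3 - d) (2 * PI)) by (apply (RInt_Chasles (V:=R_CompleteNormedModule)); apply u_ex).
  assert (P1 : 0 <= RInt (u_unnorm g) 0 (2 * PI / 3 - d)).
  { apply RInt_ge_0. lra. apply u_ex. intros; apply u_ge0; lra. }
  assert (P2 : 0 <= RInt (u_unnorm g) (2 * PI / 3 + d) (2 * PI)).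
  { apply RInt_ge_0. lra. apply u_ex. intros; apply u_ge0; lra. }
  assert (HH : RInt (fun _ => 2 * d * exp (alpha g * (Dlt - 6 * d)) / M g) (2 * PI / 3 - d) (2 * PI / 3 + d)
     <= RInt (u_unnorm g) (2 * PI / 3 - d) (2 * PI / 3 + d)).
  { apply RInt_le. lra. apply (ex_RInt_const (V:=R_CompleteNormedModule)). apply u_ex.
    intros x Hx. apply lower_u; auto. unfold Rabs; destruct Rcase_abs; lra. }
  rewrite RInt_const_R in HH.
  replace (4 * d * d * exp (alpha g * (Dlt - 6 * d)) / M g) with
    ((2 * PI / 3 + d - (2 * PI / 3 - d)) * (2 * d * exp (alpha g * (Dlt - 6 * d)) / M g)) by (field; generalize (M_pos g); lra).
  lra.
Qed.
Definition fc g c := fun theta : R => if Rlt_dec c (circ_dist theta (2 * PI / 3))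
                     then u_star g theta else 0.

Lemma piece_in g c p q : p <= q -> (forall x, p < x < q -> c < circ_dist x (2 * PI / 3)) ->
  ex_RInt (fc g c) p q.
Proof.
  intros Hpq H. apply (ex_RInt_ext (V:=R_CompleteNormedModule) (u_star g)).
  intros x Hx. rewrite Rmin_left, Rmax_right in Hx by lra.
  unfold fc. destruct Rlt_dec; auto. exfalso; apply n; apply H; auto.
  apply us_ex.
Qed.

Lemma piece_out g c p q : p <= q -> (forall x, p < x < q -> ~ c < circ_dist x (2 * PI / 3)) ->
  ex_RInt (fc g c) p q.
Proof.
  intros Hpq H. apply (ex_RInt_ext (V:=R_CompleteNormedModule) (fun _ => 0)).
  intros x Hx. rewrite Rmin_left, Rmax_right in Hx by lra.
  unfold fc. destruct Rlt_dec; auto. exfalso; apply (H x); auto.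
  apply (ex_RInt_const (V:=R_CompleteNormedModule)).
Qed.


Lemma ex_fc g c : 0 < c -> ex_RInt (fc g c) 0 (2 * PI).
Proof.
  intros Hc. generalize PI_gt3; intro HPI.
  destruct (Rle_dec PI c).
  - apply piece_out. lra. intros x Hx Hf. unfold circ_dist, Rmin in Hf.
    destruct Rle_dec in Hf; lra.
  - set (q1 := Rmax 0 (2 * PI / 3 - c)).
    set (q2 := 2 * PI / 3 + c).
    set (q3 := Rmin (2 * PI) (8 * PI / 3 - c)).
    assert (H1 : 0 <= q1 /\ 2 * PI / 3 - c <= q1 /\ (q1 = 0 \/ q1 = 2 * PI / 3 - c)).
    { unfold q1, Rmax; destruct Rle_dec; lra. }
    assert (H3 : q3 <= 2 * PI /\ q3 <= 8 * PI / 3 - c /\ (q3 = 2 * PI \/ q3 = 8 * PI / 3 - c)).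
    { unfold q3, Rmin; destruct Rle_dec; lra. }
    apply (ex_RInt_Chasles (V:=R_CompleteNormedModule) _ 0 q1).
    { apply piece_in. lra. intros x Hx. unfold circ_dist.
      rewrite Rabs_left by lra. apply Rmin_glb_lt; lra. }
    apply (ex_RInt_Chasles (V:=R_CompleteNormedModule) _ q1 q2).
    { apply piece_out. unfold q2; lra. intros x Hx Hf. unfold circ_dist in Hf.
      generalize (Rmin_l (Rabs (x - 2 * PI / 3)) (2 * PI - Rabs (x - 2 * PI / 3))); intro.
      unfold Rabs in *; destruct Rcase_abs; unfold q2 in *; lra. }
    apply (ex_RInt_Chasles (V:=R_CompleteNormedModule) _ q2 q3).
    { apply piece_in. unfold q2; lra. intros x Hx. unfold circ_dist. unfold q2 in *.
      rewrite Rabs_right by lra. apply Rmin_glb_lt; lra. }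
    { apply piece_out. lra. intros x Hx Hf. unfold circ_dist in Hf.
      generalize (Rmin_r (Rabs (x - 2 * PI / 3)) (2 * PI - Rabs (x - 2 * PI / 3))); intro.
      rewrite Rabs_right in * by (unfold q2 in *; lra). lra. }
Qed.
Lemma Dlt_le : Dlt <= 2 * PI.
Proof.
  generalize PI_gt3; intro. unfold Dlt.
  assert (V (2 * PI / 3) <= 2 * PI) by (apply V_le2PI; lra).
  assert (0 <= V (4 * PI / 3)) by (apply V_ge0; lra). lra.
Qed.

Theorem lemma4p5 :
  forall c eps : R, 0 < c -> 0 < eps ->
  exists gamma0 : R, 0 < gamma0 /\
    forall gamma : R, 0 < gamma -> gamma < gamma0 -> prob_far gamma c < eps.
Proof.
  intros c eps Hc Heps. generalize PI_gt3; intro HPI.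
  set (c' := Rmin c (PI / 3)).
  assert (Hc' : 0 < c' <= PI / 3).
  { unfold c', Rmin; destruct Rle_dec; lra. }
  assert (Hcc : c' <= c) by apply Rmin_l.
  set (k := kap c').
  assert (Hk : 0 < k) by (apply kap_pos; auto).
  assert (Hk2 : k <= Dlt) by (apply kap_le; auto).
  generalize Dlt_le; intro HD.
  set (d := k / 12).
  assert (Hd : 0 < d <= PI / 3) by (unfold d; lra).
  exists (eps * k * (d * d) / (2 * (PI * PI))). split.
  { apply Rdiv_lt_0_compat. apply Rmult_lt_0_compat. nra. nra. nra. }
  intros g Hg Hg0.
  generalize (alpha_pos g Hg) (M_pos g) (M_le g Hg); intros Hal HM HM2.
  set (E2 := exp (alpha g * (Dlt - 6 * d))).
  set (E3 := exp (- (alpha g * k / 2))).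
  set (E1 := exp (alpha g * (Dlt - k))).
  assert (HE1 : E1 = E2 * E3) by (unfold E1, E2, E3; rewrite <- exp_plus; f_equal; unfold d; field).
  assert (HE1' : 1 <= E1) by (unfold E1; rewrite <- exp_0; apply exp_le_mono; nra).
  assert (HE2 : 0 < E2) by apply exp_pos.
  assert (HE3 : 0 < E3) by apply exp_pos.
  generalize (lower_Z g d Hg Hd); fold E2; intro HZ.
  assert (HZp : 0 < 4 * d * d * E2 / M g).
  { apply Rdiv_lt_0_compat; auto. nra. }
  set (K := PI * E3 / (d * d)).
  assert (HK : 0 < K) by (unfold K; apply Rdiv_lt_0_compat; nra).
  assert (PW : forall x, 0 < x < 2 * PI -> fc g c x <= K).
  { intros x Hx. unfold fc. destruct Rlt_dec as [Hf|Hf]; [|lra].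
    assert (Ha : c' <= Rabs (x - 2 * PI / 3)).
    { unfold circ_dist in Hf. generalize (Rmin_l (Rabs (x - 2 * PI / 3)) (2 * PI - Rabs (x - 2 * PI / 3))). lra. }
    generalize (upper_u g c' x Hg Hc' ltac:(lra) Ha); fold k; fold E1; intro HU.
    assert (X1 : 1 <= 2 * PI * E1 / M g).
    { apply (Rmult_le_reg_r (M g)); auto. unfold Rdiv. rewrite Rmult_assoc, Rinv_l by lra. nra. }
    assert (X2 : K * (4 * d * d * E2 / M g) = 4 * PI * E1 / M g).
    { unfold K. rewrite HE1. field. split; lra. }
    assert (X3 : u_unnorm g x <= K * Zc g).
    { assert (K * (4 * d * d * E2 / M g) <= K * Zc g) by (apply Rmult_le_compat_l; lra).
      assert (4 * PI * E1 / M g = 2 * PI * E1 / M g + 2 * PI * E1 / M g) by (field; lra).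
      lra. }
    unfold u_star. apply (Rmult_le_reg_r (Zc g)). lra.
    unfold Rdiv. rewrite Rmult_assoc, Rinv_l by lra. lra. }
  unfold prob_far. change (RInt (fc g c) 0 (2 * PI) < eps).
  assert (HI : RInt (fc g c) 0 (2 * PI) <= RInt (fun _ => K) 0 (2 * PI)).
  { apply RInt_le. lra. apply ex_fc; auto. apply (ex_RInt_const (V:=R_CompleteNormedModule)).
    auto. }
  rewrite RInt_const_R in HI.
  assert (HE3b : E3 * (k / g) < 1).
  { unfold E3. replace (alpha g * k / 2) with (k / g) by (unfold alpha; field; lra).
    rewrite exp_Ropp. generalize (exp_ineq1 (k / g)) (exp_pos (k / g)); intros.
    assert (0 < k / g) by (apply Rdiv_lt_0_compat; lra).
    apply (Rmult_lt_reg_r (exp (k / g))); auto.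
    replace (/ exp (k / g) * (k / g) * exp (k / g)) with (k / g) by (field; lra).
    specialize (H ltac:(lra)). lra. }
  assert (HE3c : E3 * k < g).
  { replace (E3 * k) with (E3 * (k / g) * g) by (field; lra). nra. }
  assert (Fin : (2 * PI - 0) * K < eps).
  { unfold K.
    replace ((2 * PI - 0) * (PI * E3 / (d * d))) with (2 * (PI * PI) * (E3 * k) / (k * (d * d))) by (field; lra).
    assert (Hkd : 0 < k * (d * d)) by (apply Rmult_lt_0_compat; [lra| apply Rmult_lt_0_compat; lra]).
    apply (Rmult_lt_reg_r (k * (d * d))). exact Hkd.
    unfold Rdiv at 1. rewrite Rmult_assoc, Rinv_l by lra. rewrite Rmult_1_r.
    assert (g * (2 * (PI * PI)) < eps * k * (d * d)).
    { apply (Rmult_lt_reg_r (/ (2 * (PI * PI)))). apply Rinv_0_lt_compat; nra.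
      rewrite Rmult_assoc, Rinv_r, Rmult_1_r by nra. exact Hg0. }
    nra. }
  lra.
Qed.
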